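(* Let $n>1$. The set $\{N\in\mathcal{G}_n:\mathbb{F}_n/N\text{ is torsion-free}\}$ is $\mathbf{\Pi}^0_1$-complete.
   Context: $\mathbb{F}_n$ is the free group on $\gamma_1,\dots,\gamma_n$. $\mathcal{G}_n$ is the set of normal subgroups $N\trianglelefteq\mathbb{F}_n$, viewed as a subset of $\{0,1\}^{\mathbb{F}_n}$ with the subspace topology of the product of discrete topologies (a compact zero-dimensional Polish space). $\mathbf{\Pi}^0_1$ = closed sets. $A\subseteq X$ is $\mathbf{\Pi}^0_1$-complete if it is closed and for every zero-dimensional Polish space $Y$ and every closed $B\subseteq Y$ there is a continuous $f:Y\to X$ with $f^{-1}[A]=B$. *)

(* Defs.v *)
From Stdlib Require Import Reals List Bool Arith.
Import ListNotations.
Open Scope R_scope.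

(** * The free group F_n on generators gamma_0, ..., gamma_(n-1)
    Elements are freely reduced words; a letter (i, b) is gamma_i if b = true
    and gamma_i^{-1} if b = false. *)
Definition letter := (nat * bool)%type.
Definition inv_letter (a : letter) : letter := (fst a, negb (snd a)).
Definition letter_eqb (a b : letter) : bool :=
  Nat.eqb (fst a) (fst b) && Bool.eqb (snd a) (snd b).

Fixpoint reducedb (w : list letter) : bool :=
  match w with
  | a :: ((b :: _) as w') => negb (letter_eqb b (inv_letter a)) && reducedb w'
  | _ => true
  end.

Definition word_okb (n : nat) (w : list letter) : bool :=
  forallb (fun a => Nat.ltb (fst a) n) w && reducedb w.

(** the free group F_n as a type (boolean proof component, so proof irrelevant) *)
Definition FG (n : nat) : Type := { w : list letter | word_okb n w = true }.

Definition push (a : letter) (w : list letter) : list letter :=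
  match w with
  | b :: w' => if letter_eqb b (inv_letter a) then w' else a :: w
  | [] => [a]
  end.
Definition wmul (u v : list letter) : list letter := fold_right push v u.
Definition winv (u : list letter) : list letter := rev (map inv_letter u).
Fixpoint wpow (u : list letter) (k : nat) : list letter :=
  match k with O => [] | S k' => wmul u (wpow u k') end.

Definition X (n : nat) : Type := FG n -> bool.

Definition memw {n : nat} (N : X n) (w : list letter) : Prop :=
  exists h : FG n, proj1_sig h = w /\ N h = true.

Definition is_normal_subgroup {n : nat} (N : X n) : Prop :=
  memw N [] /\
  (forall g h : FG n, N g = true -> N h = true -> memw N (wmul (proj1_sig g) (proj1_sig h))) /\
  (forall g : FG n, N g = true -> memw N (winv (proj1_sig g))) /\
  (forall g h : FG n, N h = true ->
     memw N (wmul (winv (proj1_sig g)) (wmul (proj1_sig h) (proj1_sig g)))).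

Definition quotient_torsion_free {n : nat} (N : X n) : Prop :=
  forall (g : FG n) (k : nat), (1 <= k)%nat -> memw N (wpow (proj1_sig g) k) -> N g = true.

Definition prod_open {n : nat} (U : X n -> Prop) : Prop :=
  forall x, U x -> exists F : list (FG n),
    forall y, (forall c, In c F -> y c = x c) -> U y.

Definition closed_in_Gn {n : nat} (A : X n -> Prop) : Prop :=
  (forall x, A x -> is_normal_subgroup x) /\
  exists U, prod_open U /\ (forall x, is_normal_subgroup x -> (~ A x <-> U x)).

Record ZDPolish : Type := {
  carrier :> Type;
  dist : carrier -> carrier -> R;
  dist_nonneg : forall x y, 0 <= dist x y;
  dist_eq0 : forall x y, dist x y = 0 <-> x = y;
  dist_sym : forall x y, dist x y = dist y x;
  dist_tri : forall x y z, dist x z <= dist x y + dist y z;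
  complete : forall u : nat -> carrier,
    (forall eps, 0 < eps -> exists N, forall m k, (N <= m)%nat -> (N <= k)%nat ->
        dist (u m) (u k) < eps) ->
    exists l, forall eps, 0 < eps -> exists N, forall m, (N <= m)%nat -> dist (u m) l < eps;
  separable : exists s : nat -> option carrier,
    forall x eps, 0 < eps -> exists k y, s k = Some y /\ dist x y < eps;
  zero_dim : forall U : carrier -> Prop,
    (forall x, U x -> exists eps, 0 < eps /\ forall y, dist x y < eps -> U y) ->
    forall x, U x -> exists V : carrier -> Prop,
      (forall z, V z -> exists eps, 0 < eps /\ forall y, dist z y < eps -> V y) /\
      (forall z, ~ V z -> exists eps, 0 < eps /\ forall y, dist z y < eps -> ~ V y) /\
      V x /\ (forall y, V y -> U y)
}.

Definition mopen {Y : ZDPolish} (U : Y -> Prop) : Prop :=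
  forall x, U x -> exists eps, 0 < eps /\ forall y, dist Y x y < eps -> U y.

Definition mclosed {Y : ZDPolish} (B : Y -> Prop) : Prop := mopen (fun y => ~ B y).

Definition continuous_to_Gn {n : nat} {Y : ZDPolish} (f : Y -> X n) : Prop :=
  (forall y, is_normal_subgroup (f y)) /\
  forall U : X n -> Prop, prod_open U ->
    mopen (fun y => U (f y) /\ is_normal_subgroup (f y)).

Definition Pi01_complete_in_Gn {n : nat} (A : X n -> Prop) : Prop :=
  closed_in_Gn A /\
  forall (Y : ZDPolish) (B : Y -> Prop), mclosed B ->
    exists f : Y -> X n, continuous_to_Gn f /\ forall y, A (f y) <-> B y.

(* Main.v *)
Require Import Defs.
From Stdlib Require Import Reals List Bool Arith.
From Stdlib Require Import ZArith Lia Lra Classical ClassicalEpsilon Cantor.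
Import ListNotations.

Lemma letter_eqb_spec a b : letter_eqb a b = true <-> a = b.
Proof.
  destruct a as [i x], b as [j y]; unfold letter_eqb; simpl.
  rewrite andb_true_iff, Nat.eqb_eq, eqb_true_iff. split.
  - intros [-> ->]; reflexivity.
  - intros H; inversion H; auto.
Qed.

Lemma inv_inv a : inv_letter (inv_letter a) = a.
Proof. destruct a as [i b]; unfold inv_letter; simpl; rewrite negb_involutive; reflexivity. Qed.

Definition cl (a : letter) : Z :=
  if Nat.eqb (fst a) 0 then (if snd a then 1 else -1)%Z else 0%Z.
Fixpoint ex (w : list letter) : Z :=
  match w with [] => 0%Z | a :: w' => (cl a + ex w')%Z end.

Lemma cl_inv a : cl (inv_letter a) = (- cl a)%Z.
Proof. destruct a as [i b]; unfold cl, inv_letter; simpl; destruct (i =? 0)%nat, b; reflexivity. Qed.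

Lemma ex_push a w : ex (push a w) = (cl a + ex w)%Z.
Proof.
  destruct w as [|b w]; simpl.
  - reflexivity.
  - destruct (letter_eqb b (inv_letter a)) eqn:E; simpl.
    + apply letter_eqb_spec in E; subst b. rewrite cl_inv. lia.
    + reflexivity.
Qed.

Lemma ex_wmul u v : ex (wmul u v) = (ex u + ex v)%Z.
Proof.
  induction u as [|a u IH].
  - reflexivity.
  - unfold wmul in *; simpl. rewrite ex_push, IH. lia.
Qed.

Lemma ex_app u v : ex (u ++ v) = (ex u + ex v)%Z.
Proof. induction u as [|a u IH]; simpl; [reflexivity|rewrite IH; lia]. Qed.

Lemma ex_winv u : ex (winv u) = (- ex u)%Z.
Proof.
  unfold winv. induction u as [|a u IH]; simpl; [reflexivity|].
  rewrite ex_app, IH; simpl. rewrite cl_inv. lia.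
Qed.

Lemma ex_wpow u k : ex (wpow u k) = (Z.of_nat k * ex u)%Z.
Proof.
  induction k as [|k IH]; [reflexivity|]. change (wpow u (S k)) with (wmul u (wpow u k)).
  rewrite ex_wmul, IH. rewrite Nat2Z.inj_succ. lia.
Qed.

Lemma okb_iff n w : word_okb n w = true <->
  (forall a, In a w -> (fst a < n)%nat) /\ reducedb w = true.
Proof.
  unfold word_okb. rewrite andb_true_iff, forallb_forall.
  split; intros [H1 H2]; split; auto; intros a Ha; apply Nat.ltb_lt; auto.
Qed.

Lemma red_tail b w : reducedb (b :: w) = true -> reducedb w = true.
Proof. destruct w; simpl; auto. rewrite andb_true_iff; tauto. Qed.

Lemma push_ok n a w : (fst a < n)%nat -> word_okb n w = true -> word_okb n (push a w) = true.
Proof.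
  intros Ha Hw. apply okb_iff in Hw as [H1 H2]. apply okb_iff.
  destruct w as [|b w]; simpl.
  - split; auto. intros x [<-|[]]; auto.
  - destruct (letter_eqb b (inv_letter a)) eqn:E.
    + split. intros x Hx; apply H1; simpl; auto. eapply red_tail; eauto.
    + split. intros x [<-|Hx]; auto.
      simpl in H2 |- *. rewrite E. simpl. exact H2.
Qed.

Lemma wmul_ok n u v : word_okb n u = true -> word_okb n v = true -> word_okb n (wmul u v) = true.
Proof.
  intros Hu Hv. induction u as [|a u IH]; [exact Hv|].
  pose proof Hu as Hu'. apply okb_iff in Hu' as [H1 H2].
  unfold wmul; simpl. apply push_ok. apply H1; simpl; auto.
  apply IH. apply okb_iff. split. intros x Hx; apply H1; simpl; auto. eapply red_tail; eauto.
Qed.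

Lemma red_iff l : reducedb l = true <->
  (forall l1 a b l2, l = l1 ++ a :: b :: l2 -> letter_eqb b (inv_letter a) = false).
Proof.
  induction l as [|x l IH].
  - split; auto. intros _ l1 a b l2 H. destruct l1; discriminate.
  - split.
    + intros H l1 a b l2 E. destruct l1 as [|y l1]; simpl in E; injection E as -> E.
      * subst l. simpl in H. apply andb_true_iff in H as [H _]. now apply negb_true_iff.
      * apply (proj1 IH (red_tail _ _ H) l1 a b l2 E).
    + intros H. destruct l as [|b l]; [reflexivity|].
      change (negb (letter_eqb b (inv_letter x)) && reducedb (b :: l) = true).
      apply andb_true_iff; split.
      * apply negb_true_iff. apply (H [] x b l). reflexivity.
      * apply IH. intros l1 a c l2 E. apply (H (x :: l1) a c l2). rewrite E; reflexivity.
Qed.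

Lemma letter_eqb_sym a b : letter_eqb a b = letter_eqb b a.
Proof.
  destruct (letter_eqb a b) eqn:E1, (letter_eqb b a) eqn:E2; auto.
  - apply letter_eqb_spec in E1; subst; rewrite <- E2; symmetry; apply letter_eqb_spec; auto.
  - apply letter_eqb_spec in E2; subst; rewrite <- E1; apply letter_eqb_spec; auto.
Qed.

Lemma winv_ok n u : word_okb n u = true -> word_okb n (winv u) = true.
Proof.
  intros Hu. apply okb_iff in Hu as [H1 H2]. apply okb_iff. unfold winv. split.
  - intros a Ha. apply in_rev in Ha. apply in_map_iff in Ha as [x [<- Hx]].
    simpl. apply H1; auto.
  - apply red_iff. intros l1 a b l2 E.
    assert (E2 : map inv_letter u = rev l2 ++ b :: a :: rev l1).
    { rewrite <- (rev_involutive (map inv_letter u)), E.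
      rewrite rev_app_distr. simpl. rewrite <- !app_assoc. reflexivity. }
    assert (E3 : u = map inv_letter (rev l2) ++ inv_letter b :: inv_letter a :: map inv_letter (rev l1)).
    { rewrite <- (map_id u) at 1. rewrite <- (map_ext _ _ inv_inv u), <- map_map, E2, map_app. reflexivity. }
    pose proof (proj1 (red_iff u) H2 _ _ _ _ E3) as H. rewrite inv_inv in H.
    rewrite letter_eqb_sym. exact H.
Qed.

Lemma wpow_ok n u k : word_okb n u = true -> word_okb n (wpow u k) = true.
Proof.
  intros Hu. induction k as [|k IH]; [reflexivity|]. change (wpow u (S k)) with (wmul u (wpow u k)). apply wmul_ok; auto.
Qed.

Definition clopen {Y : ZDPolish} (V : Y -> Prop) := mopen V /\ mopen (fun y => ~ V y).

Definition pick {T : Type} (P : (T -> Prop) -> Prop) : T -> Prop :=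
  match excluded_middle_informative (exists V, P V) with
  | left h => proj1_sig (constructive_indefinite_description _ h)
  | right _ => fun _ => False
  end.

Lemma pick_spec {T : Type} (P : (T -> Prop) -> Prop) :
  (exists V, P V) -> P (pick P).
Proof.
  intros h. unfold pick. destruct (excluded_middle_informative _) as [h'|h'].
  - exact (proj2_sig (constructive_indefinite_description _ h')).
  - contradiction.
Qed.

Lemma pick_cases {T : Type} (P : (T -> Prop) -> Prop) :
  P (pick P) \/ pick P = (fun _ => False).
Proof.
  unfold pick. destruct (excluded_middle_informative _) as [h'|h'].
  - left. exact (proj2_sig (constructive_indefinite_description _ h')).
  - right. reflexivity.
Qed.

Lemma clopen_cover (Y : ZDPolish) (U : Y -> Prop) : mopen U ->
  exists C : nat -> Y -> Prop, (forall j, clopen (C j)) /\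
    (forall j y, C j y -> U y) /\ (forall y, U y -> exists j, C j y).
Proof.
  intros HU. destruct (separable Y) as [s Hs].
  set (good := fun (k m : nat) (V : Y -> Prop) =>
    clopen V /\ (forall y, V y -> U y) /\
    exists z, s k = Some z /\ forall y, Defs.dist Y z y < / INR (S m) -> V y).
  exists (fun j => pick (good (fst (of_nat j)) (snd (of_nat j)))).
  split; [|split].
  - intros j. destruct (pick_cases (good (fst (of_nat j)) (snd (of_nat j)))) as [[H _]|H].
    + exact H.
    + rewrite H. split.
      * intros x [].
      * intros x _. exists 1. split; [lra|]. intros y _ [].
  - intros j y. destruct (pick_cases (good (fst (of_nat j)) (snd (of_nat j)))) as [[_ [H _]]|H].
    + apply H.
    + rewrite H. intros [].
  - intros x Ux. destruct (zero_dim Y U HU x Ux) as [V [HVo [HVc [Vx VU]]]].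
    destruct (HVo x Vx) as [eps [epos Heps]].
    destruct (archimed_cor1 (eps / 2)) as [N [HN Npos]]; [lra|].
    assert (Npos' : 0 < INR N) by (apply lt_0_INR; lia).
    assert (Ipos : 0 < / INR N) by (apply Rinv_0_lt_compat; lra).
    destruct (Hs x (/ INR N) Ipos) as [k [z [sk dxz]]].
    set (m := pred N).
    assert (Hm : INR (S m) = INR N) by (f_equal; unfold m; lia).
    assert (G : exists V, good k m V).
    { exists V. split; [split; [exact HVo|exact HVc]|]. split; [exact VU|].
      exists z. split; [exact sk|]. intros y Hy. apply Heps. rewrite Hm in Hy.
      pose proof (Defs.dist_tri Y x z y). lra. }
    exists (to_nat (k, m)). rewrite cancel_of_to. simpl.
    destruct (pick_spec _ G) as [_ [_ [z' [sk' Hz']]]].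
    rewrite sk in sk'. injection sk' as <-. apply Hz'. rewrite Defs.dist_sym, Hm. exact dxz.
Qed.

Definition dd (j : nat) : Z := (2 ^ Z.of_nat (S j))%Z.

Lemma dd_div i j : (i <= j)%nat -> Z.divide (dd i) (dd j).
Proof.
  intros H. exists (2 ^ Z.of_nat (j - i))%Z. unfold dd.
  rewrite <- Z.pow_add_r by lia. f_equal. lia.
Qed.

Lemma dd_ge2 j : (2 <= dd j)%Z.
Proof.
  unfold dd. rewrite Nat2Z.inj_succ, Z.pow_succ_r by lia.
  pose proof (Z.pow_pos_nonneg 2 (Z.of_nat j)). lia.
Qed.

Lemma dd_gt j : (Z.of_nat j < dd j)%Z.
Proof.
  unfold dd. pose proof (Z.pow_gt_lin_r 2 (Z.of_nat (S j))). lia.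
Qed.

Definition Pm {Y : ZDPolish} (C : nat -> Y -> Prop) (y : Y) (z : Z) : Prop :=
  z = 0%Z \/ exists j, C j y /\ Z.divide (dd j) z.

Lemma Pm_add {Y : ZDPolish} C (y : Y) a b : Pm C y a -> Pm C y b -> Pm C y (a + b).
Proof.
  intros [->|[j1 [H1 D1]]] [->|[j2 [H2 D2]]].
  - left; reflexivity.
  - right; exists j2; auto.
  - right; exists j1; rewrite Z.add_0_r; auto.
  - right. destruct (le_ge_dec j1 j2) as [L|L].
    + exists j1. split; auto. apply Z.divide_add_r; auto.
      eapply Z.divide_trans; [apply dd_div; exact L|exact D2].
    + exists j2. split; auto. apply Z.divide_add_r; auto.
      eapply Z.divide_trans; [apply dd_div; exact L|exact D1].
Qed.

Lemma Pm_opp {Y : ZDPolish} C (y : Y) a : Pm C y a -> Pm C y (- a).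
Proof.
  intros [->|[j [H D]]]. left; reflexivity. right; exists j; split; auto.
  apply Z.divide_opp_r; auto.
Qed.

Lemma Pm_bounded {Y : ZDPolish} C (y : Y) z : z <> 0%Z ->
  (Pm C y z <-> exists j, (j < Z.to_nat (Z.abs z))%nat /\ C j y /\ Z.divide (dd j) z).
Proof.
  intros Hz. split.
  - intros [H|[j [H D]]]; [contradiction|]. exists j. split; auto.
    assert (D' : Z.divide (dd j) (Z.abs z)) by (apply Z.divide_abs_r; auto).
    apply Z.divide_pos_le in D'; [|lia]. pose proof (dd_gt j). lia.
  - intros [j [_ [H D]]]. right; exists j; auto.
Qed.

Lemma finite_agree (Y : ZDPolish) (C : nat -> Y -> Prop) (HC : forall j, clopen (C j))
  (y : Y) (J : nat) : exists eps, 0 < eps /\ forall y', Defs.dist Y y y' < eps ->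
    forall j, (j < J)%nat -> (C j y' <-> C j y).
Proof.
  induction J as [|J IH].
  - exists 1. split; [lra|]. intros; lia.
  - destruct IH as [e1 [e1p H1]].
    assert (H2 : exists e2, 0 < e2 /\ forall y', Defs.dist Y y y' < e2 -> (C J y' <-> C J y)).
    { destruct (classic (C J y)) as [c|c].
      - destruct (proj1 (HC J) y c) as [e [ep He]]. exists e; split; auto.
        intros y' d; split; auto.
      - destruct (proj2 (HC J) y c) as [e [ep He]]. exists e; split; auto.
        intros y' d; split; intros h; [exfalso; exact (He y' d h)|contradiction]. }
    destruct H2 as [e2 [e2p H2]].
    exists (Rmin e1 e2). split; [apply Rmin_pos; auto|].
    intros y' d j Hj. destruct (Nat.eq_dec j J) as [->|ne].
    + apply H2. eapply Rlt_le_trans; [exact d|apply Rmin_r].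
    + apply H1; [eapply Rlt_le_trans; [exact d|apply Rmin_l]|lia].
Qed.

Lemma Pm_agree (Y : ZDPolish) (C : nat -> Y -> Prop) (HC : forall j, clopen (C j))
  (y : Y) (z : Z) : exists eps, 0 < eps /\ forall y', Defs.dist Y y y' < eps ->
    (Pm C y' z <-> Pm C y z).
Proof.
  destruct (Z.eq_dec z 0) as [->|nz].
  - exists 1. split; [lra|]. intros; split; intros; left; reflexivity.
  - destruct (finite_agree Y C HC y (Z.to_nat (Z.abs z))) as [e [ep He]].
    exists e. split; auto. intros y' d.
    rewrite !(Pm_bounded C _ z nz). split; intros [j [Hj [Cj D]]]; exists j; split; auto;
      split; auto; apply (He y' d j Hj); auto.
Qed.

Definition fN (n : nat) {Y : ZDPolish} (C : nat -> Y -> Prop) (y : Y) : X n :=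
  fun h => if excluded_middle_informative (Pm C y (ex (proj1_sig h))) then true else false.

Lemma fN_true n {Y : ZDPolish} C (y : Y) h : fN n C y h = true <-> Pm C y (ex (proj1_sig h)).
Proof.
  unfold fN. destruct (excluded_middle_informative _); split; intros; auto; try discriminate; contradiction.
Qed.

Lemma memw_fN n {Y : ZDPolish} C (y : Y) w : word_okb n w = true ->
  (memw (fN n C y) w <-> Pm C y (ex w)).
Proof.
  intros Hw. split.
  - intros [h [<- Hh]]. apply fN_true in Hh. exact Hh.
  - intros H. exists (exist _ w Hw). split; [reflexivity|]. apply fN_true. exact H.
Qed.

Lemma fN_normal n {Y : ZDPolish} C (y : Y) : is_normal_subgroup (fN n C y).
Proof.
  split; [|split; [|split]].
  - apply memw_fN; [reflexivity|]. left; reflexivity.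
  - intros g h Hg Hh. apply fN_true in Hg, Hh. apply memw_fN.
    + apply wmul_ok; [exact (proj2_sig g)|exact (proj2_sig h)].
    + rewrite ex_wmul. apply Pm_add; auto.
  - intros g Hg. apply fN_true in Hg. apply memw_fN.
    + apply winv_ok; exact (proj2_sig g).
    + rewrite ex_winv. apply Pm_opp; auto.
  - intros g h Hh. apply fN_true in Hh. apply memw_fN.
    + apply wmul_ok; [apply winv_ok; exact (proj2_sig g)|].
      apply wmul_ok; [exact (proj2_sig h)|exact (proj2_sig g)].
    + rewrite !ex_wmul, ex_winv.
      replace (- ex (proj1_sig g) + (ex (proj1_sig h) + ex (proj1_sig g)))%Z
        with (ex (proj1_sig h)) by lia. exact Hh.
Qed.

Lemma list_agree n (Y : ZDPolish) (C : nat -> Y -> Prop) (HC : forall j, clopen (C j))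
  (y : Y) (F : list (FG n)) : exists eps, 0 < eps /\ forall y', Defs.dist Y y y' < eps ->
    forall c, In c F -> fN n C y' c = fN n C y c.
Proof.
  induction F as [|c F IH].
  - exists 1. split; [lra|]. intros y' _ c [].
  - destruct IH as [e1 [e1p H1]].
    destruct (Pm_agree Y C HC y (ex (proj1_sig c))) as [e2 [e2p H2]].
    exists (Rmin e1 e2). split; [apply Rmin_pos; auto|].
    intros y' d c' [<-|Hc].
    + assert (d2 : Defs.dist Y y y' < e2) by (eapply Rlt_le_trans; [exact d|apply Rmin_r]).
      specialize (H2 y' d2). unfold fN.
      destruct (excluded_middle_informative (Pm C y' _)), (excluded_middle_informative (Pm C y _));
        auto; tauto.
    + apply H1; auto. eapply Rlt_le_trans; [exact d|apply Rmin_l].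
Qed.

Theorem mainTheorem10 (n : nat) (hn : (1 < n)%nat) :
  Pi01_complete_in_Gn (fun N : X n => is_normal_subgroup N /\ quotient_torsion_free N).
Proof.
  split.
  - split; [intros x [H _]; exact H|].
    exists (fun x : X n => exists (g h : FG n) k, (1 <= k)%nat /\
              proj1_sig h = wpow (proj1_sig g) k /\ x h = true /\ x g = false).
    split.
    + intros x [g [h [k [Hk [E [Hh Hg]]]]]]. exists [h; g]. intros y Hy.
      exists g, h, k. split; auto. split; auto.
      rewrite (Hy h) by (simpl; auto). rewrite (Hy g) by (simpl; auto). auto.
    + intros x Hx. split.
      * intros HA. assert (~ quotient_torsion_free x) by tauto.
        unfold quotient_torsion_free in H.
        apply not_all_ex_not in H as [g H]. apply not_all_ex_not in H as [k H].
        apply imply_to_and in H as [Hk H]. apply imply_to_and in H as [[h [E Hh]] Hg].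
        exists g, h, k. split; auto. split; auto. split; auto.
        destruct (x g); auto. contradiction.
      * intros [g [h [k [Hk [E [Hh Hg]]]]]] [_ T].
        assert (x g = true) by (apply (T g k Hk); exists h; auto). congruence.
  - intros Y B HB.
    destruct (clopen_cover Y (fun y => ~ B y) HB) as [C [HC [CU Cov]]].
    exists (fN n C). split.
    + split; [intros y; apply fN_normal|].
      intros U HU x [Ux _]. destruct (HU _ Ux) as [F HF].
      destruct (list_agree n Y C HC x F) as [e [ep He]].
      exists e. split; auto. intros y d. split; [|apply fN_normal].
      apply HF. intros c Hc. apply He; auto.
    + intros y. split.
      * intros [_ T]. destruct (classic (B y)) as [b|b]; auto. exfalso.
        destruct (Cov y b) as [j Cj].
        assert (Hg : word_okb n [(0%nat, true)] = true).
        { apply okb_iff. split; [|reflexivity]. intros a [<-|[]]. simpl. lia. }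
        set (g := exist (fun w => word_okb n w = true) [(0%nat, true)] Hg : FG n).
        assert (Hk : (1 <= 2 ^ S j)%nat).
        { pose proof (Nat.pow_nonzero 2 (S j)). lia. }
        assert (M : memw (fN n C y) (wpow (proj1_sig g) (2 ^ S j))).
        { apply memw_fN; [apply wpow_ok; exact Hg|]. right. exists j. split; auto.
          rewrite ex_wpow. simpl (ex (proj1_sig g)). rewrite Nat2Z.inj_pow.
          unfold dd, cl. simpl. exists 1%Z. ring. }
        specialize (T g _ Hk M). apply fN_true in T.
        destruct T as [T|[j' [_ D]]]; [change (ex (proj1_sig g)) with 1%Z in T; discriminate|].
        change (ex (proj1_sig g)) with 1%Z in D.
        apply Z.divide_pos_le in D; [|lia]. pose proof (dd_ge2 j'). lia.
      * intros b. split; [apply fN_normal|].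
        assert (NC : forall j, ~ C j y) by (intros j Cj; exact (CU j y Cj b)).
        intros g k Hk [h [E Hh]]. apply fN_true in Hh. rewrite E, ex_wpow in Hh.
        apply fN_true. left.
        destruct Hh as [Hh|[j [Cj _]]]; [|exfalso; exact (NC j Cj)].
        apply Z.mul_eq_0 in Hh as [Hh|Hh]; [lia|exact Hh].
Qed.
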